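(* Let $G$ be a compact Hausdorff group in which every element has a countable Engel sink, and suppose $G$ has an abelian closed normal subgroup $A$ such that $G/A$ is locally nilpotent. Then every element of $G$ has a finite Engel sink.
   Context: Commutators are left-normed, $[a,b]=a^{-1}b^{-1}ab$, and $[x,{}_n g]=[x,g,\dots,g]$ with $g$ repeated $n$ times. An Engel sink of an element $g$ of a group $G$ is a set $\mathscr E(g)\subseteq G$ such that for every $x\in G$ there is a positive integer $n(x,g)$ with $[x,{}_n g]\in\mathscr E(g)$ for all $n\ge n(x,g)$. ''Countable'' means finite or denumerable. A group is locally nilpotent if every finitely generated subgroup is nilpotent. *)

(* Defs.v *)
From HB Require Import structures.
From mathcomp Require Import all_boot all_order.
From mathcomp Require Import boolp classical_sets cardinality.
From mathcomp Require Import topology.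

Set Implicit Arguments.
Unset Strict Implicit.
Unset Printing Implicit Defensive.

Local Open Scope classical_set_scope.

Section GroupDefs.
Variables (T : Type) (mul : T -> T -> T) (inv : T -> T) (one : T).

Record is_group : Prop := IsGroup {
  mulA : forall x y z, mul x (mul y z) = mul (mul x y) z;
  mul1g : forall x, mul one x = x;
  mulg1 : forall x, mul x one = x;
  mulVg : forall x, mul (inv x) x = one;
  mulgV : forall x, mul x (inv x) = one }.

Definition comm (a b : T) : T := mul (mul (inv a) (inv b)) (mul a b).

Fixpoint engel_comm (x g : T) (n : nat) : T :=
  match n with 0 => x | k.+1 => comm (engel_comm x g k) g end.

Definition engel_sink (g : T) (E : set T) : Prop :=
  forall x, exists n0 : nat, forall n, (n0 <= n)%N -> E (engel_comm x g n).

Definition is_subgroup (H : set T) : Prop :=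
  H one /\ (forall x y, H x -> H y -> H (mul x y)) /\ (forall x, H x -> H (inv x)).

Definition is_normal (H : set T) : Prop :=
  is_subgroup H /\ forall x h, H h -> H (mul (mul (inv x) h) x).

Definition is_abelian (H : set T) : Prop :=
  forall x y, H x -> H y -> mul x y = mul y x.

Definition gen (S : set T) : set T :=
  fun x => forall H, is_subgroup H -> S `<=` H -> H x.

Definition comm_subgroup (H K : set T) : set T :=
  gen (fun z => exists2 h, H h & exists2 k, K k & z = comm h k).

(* lower central series: lcs H 0 = H = gamma_1(H), lcs H (S i) = [lcs H i, H] *)
Fixpoint lcs (H : set T) (i : nat) : set T :=
  match i with 0 => H | k.+1 => comm_subgroup (lcs H k) H end.

(* For a subgroup H and a normal subgroup A:  HA/A is nilpotent
   iff some term gamma_{c+1}(H) of the lower central series of H lies in A. *)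
Definition nilpotent_mod (A H : set T) : Prop :=
  exists c : nat, lcs H c `<=` A.

(* G/A is locally nilpotent: every finitely generated subgroup of G/A is
   nilpotent; finitely generated subgroups of G/A are exactly <F>A/A for
   finite subsets F of G. *)
Definition locally_nilpotent_mod (A : set T) : Prop :=
  forall F : set T, finite_set F -> nilpotent_mod A (gen F).

End GroupDefs.

Definition is_topological_group (T : topologicalType)
    (mul : T -> T -> T) (inv : T -> T) (one : T) : Prop :=
  is_group mul inv one /\
  continuous (fun p : T * T => mul p.1 p.2) /\ continuous inv.

(* Main.v *)
Require Import Defs.
From HB Require Import structures.
From mathcomp Require Import all_boot all_order.
From mathcomp Require Import boolp classical_sets cardinality.
From mathcomp Require Import topology.
From mathcomp Require Import finmap.

Set Implicit Arguments.
Unset Strict Implicit.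
Unset Printing Implicit Defensive.

Local Open Scope classical_set_scope.

Section PointedCopy.
Variables (T : topologicalType) (x0 : T).
Definition PT : Type := T.
HB.instance Definition _ := Topological.on PT.
HB.instance Definition _ := isPointed.Build PT x0.
Lemma cc (A : set T) : compact A -> cover_compact A.
Proof.
move=> cA; have cA' : @compact PT A := cA.
by move: cA'; rewrite compact_cover.
Qed.
End PointedCopy.

Lemma bound_seq (s : seq nat) : exists N, forall k, k \in s -> (k <= N)%N.
Proof.
elim: s => [|a s [N HN]]; first by exists 0%N.
exists (maxn a N) => k; rewrite in_cons => /orP [/eqP ->|/HN kN].
  exact: leq_maxl.
by rewrite leq_max kN orbT.
Qed.

Lemma baire (T : topologicalType) (C : set T) (F : nat -> set T) :
  compact [set: T] -> hausdorff_space T -> closed C -> C !=set0 ->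
  (forall k, closed (F k)) -> C `<=` \bigcup_k F k ->
  exists k, exists U, [/\ open U, U `&` C !=set0 & U `&` C `<=` F k].
Proof.
move=> Tc Th cC [c0 Cc0] cF CF.
apply: contrapT => nH.
have step : forall kV : nat * set T, exists W : set T,
    (open kV.2 /\ kV.2 `&` C !=set0) ->
    (open W /\ W `&` C !=set0) /\ closure W `<=` kV.2 `&` ~` F kV.1.
  move=> [k V] /=.
  case: (pselect (open V /\ V `&` C !=set0)) => [[oV VC]|nG]; last first.
    by exists V.
  have ns : ~ (V `&` C `<=` F k).
    by move=> s; apply: nH; exists k, V; split.
  have [q [[Vq Cq] nFq]] : exists q, (V `&` C) q /\ ~ F k q.
    apply: contrapT => nq; apply: ns => q Hq; apply: contrapT => nF.
    by apply: nq; exists q.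
  have reg : {for q, regular_space T}.
    by apply: (@compact_regular T q setT Th Tc); exact: filterT.
  have nb : nbhs q (V `&` ~` F k).
    apply: open_nbhs_nbhs; split; last by split.
    by apply: openI => //; exact: closed_openC.
  have [N Nq cN] := reg _ nb.
  exists (N°) => _; split.
    split; first exact: open_interior.
    exists q; split => //; exact: nbhs_singleton (nbhs_interior Nq).
  apply: subset_trans cN; apply: closureS; exact: interior_subset.
have [f Hf] := choice step.
pose V := fix V (n : nat) : set T := if n is k.+1 then f (k, V k) else setT.
have good : forall n, open (V n) /\ V n `&` C !=set0.
  elim => [|n IH]; first by split; [exact: openT | exists c0].
  exact: ((Hf (n, V n)) IH).1.
have sub : forall n, closure (V n.+1) `<=` V n `&` ~` F n.
  by move=> n; exact: ((Hf (n, V n)) (good n)).2.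
have dec : forall m n, (m <= n)%N -> V n `<=` V m.
  move=> m; elim => [|n IH] hmn.
    by rewrite leqn0 in hmn; move/eqP: hmn => ->.
  rewrite leq_eqVlt in hmn; case/orP: hmn => [/eqP ->//|hmn].
  move=> x Vx; apply: IH => //.
  by have [] := sub n x (subset_closure Vx).
have cC' : compact C by apply: subclosed_compact cC Tc _.
have cov := cc c0 cC'.
have Ccov : C `<=` cover setT (fun k => ~` closure (V k.+1)).
  move=> q Cq; apply: contrapT => ncov.
  have [k _ Fkq] := CF q Cq.
  have : closure (V k.+1) q.
    by apply: contrapT => nq; apply: ncov; exists k.
  by move=> /sub [_]; apply.
have [D' _ cov'] := cov nat setT (fun k => ~` closure (V k.+1))
  (fun k _ => closed_openC (@closed_closure _ (V k.+1))) Ccov.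
have [N HN] := bound_seq (finmap.enum_fset D').
have [_ [q [VNq Cq]]] := good N.+1.
have [k Dk nq] := cov' q Cq.
apply: nq; apply: subset_closure; apply: (dec k.+1 N.+1) => //.
exact: HN.
Qed.

Section Grp.
Variables (T : Type) (mul : T -> T -> T) (inv : T -> T) (one : T).
Hypothesis G : is_group mul inv one.

Lemma gmulKg x y : mul (inv x) (mul x y) = y.
Proof. by rewrite (Defs.mulA G) (Defs.mulVg G) (Defs.mul1g G). Qed.
Lemma gmulVKg x y : mul x (mul (inv x) y) = y.
Proof. by rewrite (Defs.mulA G) (Defs.mulgV G) (Defs.mul1g G). Qed.
Lemma gmulI x y z : mul x y = mul x z -> y = z.
Proof. by move=> e; rewrite -(gmulKg x y) e gmulKg. Qed.
Lemma ginv_uniq x y : mul x y = one -> y = inv x.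
Proof. by move=> e; apply: (@gmulI x); rewrite e (Defs.mulgV G). Qed.
Lemma ginvM x y : inv (mul x y) = mul (inv y) (inv x).
Proof. by symmetry; apply: ginv_uniq; rewrite -(Defs.mulA G) gmulVKg (Defs.mulgV G). Qed.

Lemma engel_iter x g n :
  engel_comm mul inv x g n = iter n (fun y => comm mul inv y g) x.
Proof. by elim: n => //= n ->. Qed.

Lemma engel_add x g m n :
  engel_comm mul inv x g (m + n) = engel_comm mul inv (engel_comm mul inv x g m) g n.
Proof. by elim: n => [|n IH]; rewrite ?addn0 // addnS /= IH. Qed.

Lemma lcs_engel (S : set T) x g : S x -> S g -> forall c,
  lcs mul inv one (gen mul inv one S) c (engel_comm mul inv x g c).
Proof.
move=> Sx Sg; elim => [|c IH] /=.
  by move=> K _ sub; apply: sub.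
move=> K _ sub; apply: sub; exists (engel_comm mul inv x g c) => //.
by exists g => // K' _ sub'; apply: sub'.
Qed.

Variables (A : set T) (g : T).
Hypothesis HAn : is_normal mul inv one A.
Hypothesis HAab : is_abelian mul A.

Let phi y := comm mul inv y g.
Let c a := mul (mul (inv g) a) g.

Lemma commE a : phi a = mul (inv a) (c a).
Proof. by rewrite /phi /comm /c -!(Defs.mulA G). Qed.

Lemma cM a b : c (mul a b) = mul (c a) (c b).
Proof. by rewrite /c -!(Defs.mulA G) gmulVKg. Qed.

Lemma phiA a : A a -> A (phi a).
Proof.
case: HAn => [[A1 [AM AV]] AN] Aa; rewrite commE.
apply: AM; [exact: AV | exact: AN].
Qed.

Lemma phiM a b : A a -> A b -> phi (mul a b) = mul (phi a) (phi b).
Proof.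
case: HAn => [[A1 [AM AV]] AN] Aa Ab; rewrite !commE cM ginvM.
have hc : mul (inv b) (mul (inv a) (c a)) = mul (mul (inv a) (c a)) (inv b).
  by apply: HAab; [exact: AV | apply: AM; [exact: AV | exact: AN]].
have -> : mul (mul (inv b) (inv a)) (mul (c a) (c b)) =
          mul (mul (inv b) (mul (inv a) (c a))) (c b) by rewrite -!(Defs.mulA G).
by rewrite hc -!(Defs.mulA G).
Qed.

Lemma psiA n a : A a -> A (iter n phi a).
Proof. by move=> Aa; elim: n => //= n IH; exact: phiA. Qed.

Lemma psiM n a b : A a -> A b ->
  iter n phi (mul a b) = mul (iter n phi a) (iter n phi b).
Proof.
move=> Aa Ab; elim: n => //= n ->; apply: phiM; exact: psiA.
Qed.

Lemma psi1 n : iter n phi one = one.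
Proof.
have A1 : A one by case: HAn => [[]].
have := psiM n A1 A1; rewrite (Defs.mul1g G) -{1}[iter n phi one](Defs.mulg1 G).
by move=> /gmulI.
Qed.

Lemma key n a0 a a' : A a0 -> A a -> A a' ->
  iter n phi (mul a0 (mul (inv a) a')) = iter n phi a0 ->
  iter n phi a' = iter n phi a.
Proof.
case: HAn => [[A1 [AM AV]] AN] Aa0 Aa Aa'.
rewrite psiM //; last by apply: AM => //; exact: AV.
rewrite psiM //; last exact: AV.
rewrite -{2}[iter n phi a0](Defs.mulg1 G) => /gmulI /ginv_uniq ->.
apply: esym; apply: ginv_uniq.
by rewrite -psiM ?(Defs.mulVg G) ?psi1 //; exact: AV.
Qed.

End Grp.

Lemma cont_mul (T : topologicalType) (mul : T -> T -> T)
  (Hm : continuous (fun p : T * T => mul p.1 p.2)) (f h : T -> T) :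
  continuous f -> continuous h -> continuous (fun y => mul (f y) (h y)).
Proof.
move=> cf ch x.
apply: (@continuous2_cvg _ _ _ _ _ _ f h mul (f x) (h x)).
- exact: (Hm (f x, h x)).
- exact: cf.
- exact: ch.
Qed.

Lemma closed_pre (T U : topologicalType) (f : T -> U) (B : set U) :
  continuous f -> closed B -> closed (f @^-1` B).
Proof.
move=> cf cB.
have o : open (f @^-1` (~` B)).
  by apply: open_comp => [x _|]; [exact: cf | exact: closed_openC].
by rewrite -closedC preimage_setC setCK in o.
Qed.

Theorem lemma8p3 (T : topologicalType) (mul : T -> T -> T) (inv : T -> T) (one : T)
  (HG : is_topological_group mul inv one)
  (Hcompact : compact [set: T])
  (Hhaus : hausdorff_space T)
  (Hsink : forall g : T, exists2 E : set T, countable E & engel_sink mul inv g E)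
  (A : set T)
  (HAclosed : closed A)
  (HAnormal : is_normal mul inv one A)
  (HAab : is_abelian mul A)
  (HGA : locally_nilpotent_mod mul inv one A) :
  forall g : T, exists2 E : set T, finite_set E & engel_sink mul inv g E.
Proof.
move=> g.
case: HG => Gg [Hm Hi].
have HAn := HAnormal; case: HAnormal => [[A1 [AM AV]] AN].
pose phi y := comm mul inv y g.
have cid : continuous (fun y : T => y) by move=> x; exact: cvg_id.
have ccst : forall z : T, continuous (fun _ : T => z).
  by move=> z; exact: cst_continuous.
have cphi : continuous phi.
  rewrite /phi /comm.
  apply: (cont_mul Hm); apply: (cont_mul Hm) => //; exact: Hi.
have cpsi : forall n, continuous (iter n phi).
  elim => [|n IH] //= x.
  exact: (@continuous_comp _ _ _ (iter n phi) phi x (IH x) (cphi _)).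
have [E Ecount Esink] := Hsink g.
have /countable_injP [h hinj] := Ecount.
pose Gs (n k : nat) : set T :=
  A `&` (fun y => exists e, [/\ E e, h e = k & iter n phi y = e]).
have cG : forall n k, closed (Gs n k).
  move=> n k.
  case: (pselect (exists e, E e /\ h e = k)) => [[e [Ee hek]]|ne].
    have -> : Gs n k = A `&` (iter n phi @^-1` [set e]).
      apply/seteqP; split => y [Ay].
        move=> [e' [Ee' he' ye']]; split => //=; rewrite ye'.
        by apply: hinj; rewrite ?in_setE // he' hek.
      by move=> /= ye; split => //; exists e; split.
    apply: closedI => //; apply: closed_pre => //.
    exact: accessible_closed_set1 (hausdorff_accessible Hhaus) e.
  have -> : Gs n k = set0.
    apply/seteqP; split => y // [_ [e [Ee he _]]].
    by exfalso; apply: ne; exists e.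
  exact: closed0.
pose F (m : nat) : set T :=
  if @choice.unpickle (nat * nat)%type m is Some (n, k) then Gs n k else set0.
have cF : forall m, closed (F m).
  by move=> m; rewrite /F; case: (@choice.unpickle (nat * nat)%type m) => [[n k]|]; [exact: cG | exact: closed0].
have AF : A `<=` \bigcup_m F m.
  move=> y Ay.
  have [n0 Hn0] := Esink y.
  have En : E (iter n0 phi y) by rewrite -engel_iter; exact: Hn0.
  exists (@choice.pickle (nat * nat)%type (n0, h (iter n0 phi y))) => //.
  rewrite /F choice.pickleK; split => //; exists (iter n0 phi y); split => //.
have [m [U [oU [y0 [Uy0 Ay0]] UAF]]] :=
  baire Hcompact Hhaus HAclosed (ex_intro _ one A1) cF AF.
have [n HU] : exists n, forall y, U y -> A y -> iter n phi y = iter n phi y0.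
  move: UAF; rewrite /F; case: (@choice.unpickle (nat * nat)%type m) => [[n k]|] UAF; last first.
    by have := UAF y0 (conj Uy0 Ay0).
  have [_ [e0 [Ee0 he0 e0E]]] := UAF y0 (conj Uy0 Ay0).
  exists n => y Uy Ay.
  have [_ [e [Ee he eE]]] := UAF y (conj Uy Ay).
  by rewrite eE e0E; apply: hinj; rewrite ?in_setE // he he0.
have cA : compact A by apply: subclosed_compact HAclosed Hcompact _.
have covA := cc one cA.
pose Vf (a : T) := (fun y => mul (mul y0 (inv a)) y) @^-1` U.
have oV : forall a, A a -> open (Vf a).
  move=> a _; apply: open_comp => // w _.
  exact: (@cont_mul T mul Hm (fun _ => mul y0 (inv a)) (fun y => y) (ccst _) cid w).
have Acov : A `<=` cover A Vf.
  move=> a Aa; exists a => //.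
  by rewrite /Vf /= -(Defs.mulA Gg) (Defs.mulVg Gg) (Defs.mulg1 Gg).
have [D' sD cov'] := covA T A Vf oV Acov.
exists (iter n phi @` [set` D']).
  by apply: finite_image; exact: finite_fset.
move=> x.
have finF : finite_set ([set x] `|` [set g]).
  by rewrite finite_setU; split; exact: finite_set1.
have [c Hc] := HGA _ finF.
have Ab : A (engel_comm mul inv x g c).
  by apply: Hc; apply: lcs_engel; [left | right].
exists (c + n)%N => mm hm.
rewrite -(subnKC hm) -addnA engel_add engel_iter iterD.
set z := iter (mm - (c + n)) _ _.
have Az : A z by exact: (psiA Gg g HAn _ Ab).
have [a Da Va] := cov' z Az.
have Aa : A a by have := sD a Da; rewrite in_setE.
exists a => //.
apply: esym.
apply: (key Gg HAn HAab Ay0 Aa Az).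
rewrite (Defs.mulA Gg); apply: HU => //.
apply: (AM); last exact: Az.
by apply: (AM) => //; exact: AV.
Qed.
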